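(* Let $f\in C^{1,1}_L(\mathbb{R}^n)$, let $\mathcal{Y}=\{y_1,\dots,y_{n+1}\}\subset\mathbb{R}^n$ be affinely independent, let $m$ be the affine function interpolating $f$ on $\mathcal{Y}$, and let $y_0\in\mathbb{R}^n$ with barycentric coordinates $\ell_1,\dots,\ell_{n+1}$ and $\ell_0=-1$. Then for every $u\in\mathbb{R}^n$, $$|m(y_0)-f(y_0)|\le \frac{L}{2}\sum_{i=0}^{n+1}|\ell_i|\,\|y_i-u\|^2 .$$
   Context: Let $n\ge1$ and $L>0$. $C^{1,1}_L(\mathbb{R}^n)$ denotes the set of differentiable functions $f:\mathbb{R}^n\to\mathbb{R}$ with $\|\nabla f(u_1)-\nabla f(u_2)\|\le L\|u_1-u_2\|$ for all $u_1,u_2\in\mathbb{R}^n$ (Euclidean norm). For an affinely independent set $\mathcal{Y}=\{y_1,\dots,y_{n+1}\}\subset\mathbb{R}^n$, the interpolating affine function $m$ is the unique affine $m:\mathbb{R}^n\to\mathbb{R}$ with $m(y_i)=f(y_i)$ for $i=1,\dots,n+1$. The barycentric coordinates of $y_0\in\mathbb{R}^n$ with respect to $\mathcal{Y}$ are the unique reals $\ell_1,\dots,\ell_{n+1}$ with $\sum_{i=1}^{n+1}\ell_i=1$ and $\sum_{i=1}^{n+1}\ell_iy_i=y_0$; one sets $\ell_0=-1$, so that $\sum_{i=0}^{n+1}\ell_i=0$, $\sum_{i=0}^{n+1}\ell_iy_i=0$, and $m(y_0)=\sum_{i=1}^{n+1}\ell_if(y_i)$. *)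

(* Defs.v *)
From HB Require Import structures.
From mathcomp Require Import all_boot all_order all_algebra.
From mathcomp Require Import all_classical all_reals.
From mathcomp Require Import topology normedtype derive.
Set Implicit Arguments. Unset Strict Implicit. Unset Printing Implicit Defensive.
Import Order.TTheory GRing.Theory Num.Theory.
Import numFieldNormedType.Exports.
Local Open Scope ring_scope.

Definition dotv {R : realType} {n : nat} (u v : 'rV[R]_n) : R :=
  \sum_(i < n) u ord0 i * v ord0 i.
Definition enorm {R : realType} {n : nat} (u : 'rV[R]_n) : R :=
  Num.sqrt (dotv u u).

Definition gradient {R : realType} {n : nat} (f : 'rV[R]_n -> R) (x : 'rV[R]_n)
  : 'rV[R]_n := \row_(i < n) ('d f x) (delta_mx ord0 i).

Definition C11 {R : realType} {n : nat} (L : R) (f : 'rV[R]_n -> R) : Prop :=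
  (forall x, differentiable f x) /\
  (forall u1 u2, enorm (gradient f u1 - gradient f u2) <= L * enorm (u1 - u2)).

Definition affinely_independent {R : realType} {n : nat} (y : 'I_n.+1 -> 'rV[R]_n)
  : Prop :=
  forall c : 'I_n.+1 -> R, \sum_i c i = 0 -> \sum_i c i *: y i = 0 ->
    forall i, c i = 0.

Definition affine_fun {R : realType} {n : nat} (m : 'rV[R]_n -> R) : Prop :=
  exists (a : R) (c : 'rV[R]_n), forall x, m x = a + dotv c x.

(* Main.v *)
Require Import Defs.
From HB Require Import structures.
From mathcomp Require Import all_boot all_order all_algebra.
From mathcomp Require Import all_classical all_reals.
From mathcomp Require Import topology normedtype derive.
From mathcomp Require Import ring lra.
Import Order.TTheory GRing.Theory Num.Theory.
Import numFieldNormedType.Exports.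
Local Open Scope ring_scope.

Section Dot.
Variables (R : realType) (n : nat).
Implicit Types (a b c x : 'rV[R]_n).

Lemma dotvC a b : dotv a b = dotv b a.
Proof. by apply: eq_bigr => i _; rewrite mulrC. Qed.
Lemma dotvDr c x y : dotv c (x + y) = dotv c x + dotv c y.
Proof. by rewrite /dotv -big_split; apply: eq_bigr => i _; rewrite mxE mulrDr. Qed.
Lemma dotvZr c k x : dotv c (k *: x) = k * dotv c x.
Proof. by rewrite /dotv mulr_sumr; apply: eq_bigr => i _; rewrite mxE mulrCA. Qed.
Lemma dotv0r c : dotv c 0 = 0.
Proof. by rewrite /dotv big1 // => i _; rewrite mxE mulr0. Qed.
Lemma dotvNr c x : dotv c (- x) = - dotv c x.
Proof. by rewrite -scaleN1r dotvZr mulN1r. Qed.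
Lemma dotvBr c x y : dotv c (x - y) = dotv c x - dotv c y.
Proof. by rewrite dotvDr dotvNr. Qed.
Lemma dotvBl a b x : dotv (a - b) x = dotv a x - dotv b x.
Proof. by rewrite dotvC dotvBr !(dotvC x). Qed.
Lemma dotvZl k a x : dotv (k *: a) x = k * dotv a x.
Proof. by rewrite dotvC dotvZr dotvC. Qed.
Lemma dotv_sumr (I : finType) c (w : I -> R) (y : I -> 'rV[R]_n) :
  dotv c (\sum_i w i *: y i) = \sum_i w i * dotv c (y i).
Proof.
rewrite (big_morph (dotv c) (dotvDr c) (dotv0r c)).
by apply: eq_bigr => i _; rewrite dotvZr.
Qed.
Lemma dotv_ge0 a : 0 <= dotv a a.
Proof. by apply: sumr_ge0 => i _; rewrite -expr2 sqr_ge0. Qed.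
Lemma dotv_eq0 a : dotv a a = 0 -> forall x, dotv a x = 0.
Proof.
move=> h x; rewrite /dotv big1 // => i _.
have : a ord0 i * a ord0 i = 0.
  move/eqP: h; rewrite psumr_eq0 => [/allP H|j _]; last by rewrite -expr2 sqr_ge0.
  by apply/eqP; apply: H; rewrite mem_index_enum.
by move/eqP; rewrite mulf_eq0 orbb => /eqP ->; rewrite mul0r.
Qed.

Lemma CS2 a b : dotv a b ^+ 2 <= dotv a a * dotv b b.
Proof.
have [A0|Apos] := eqVneq (dotv a a) 0.
  by rewrite A0 dotv_eq0 // expr0n mul0r.
have Agt : 0 < dotv a a by rewrite lt_def Apos dotv_ge0.
set t := dotv a b / dotv a a.
have := dotv_ge0 (t *: a - b).
rewrite !dotvBl !dotvBr !dotvZl !dotvZr (dotvC b a).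
rewrite /t => H.
have e : dotv a b / dotv a a * (dotv a b / dotv a a * dotv a a) -
  dotv a b / dotv a a * dotv a b - (dotv a b / dotv a a * dotv a b - dotv b b)
  = dotv b b - dotv a b ^+ 2 / dotv a a by field.
rewrite e subr_ge0 ler_pdivrMr // in H.
by rewrite mulrC.
Qed.

Lemma CS a b : `|dotv a b| <= enorm a * enorm b.
Proof.
rewrite /enorm -sqrtrM ?dotv_ge0 // -(sqrtr_sqr (dotv a b)).
by rewrite ler_sqrt ?CS2 // mulr_ge0 ?dotv_ge0.
Qed.

Lemma enormZ k a : enorm (k *: a) = `|k| * enorm a.
Proof.
rewrite /enorm dotvZl dotvZr mulrA sqrtrM; last by rewrite -expr2 sqr_ge0.
have -> : Num.sqrt (k * k) = `|k| by rewrite -expr2 sqrtr_sqr.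
done.
Qed.
Lemma enorm_sq a : enorm a ^+ 2 = dotv a a.
Proof. by rewrite /enorm sqr_sqrtr ?dotv_ge0. Qed.
Lemma enorm_ge0 a : 0 <= enorm a.
Proof. exact: sqrtr_ge0. Qed.
End Dot.
Section Diff.
Variables (R : realType) (n : nat) (f : 'rV[R]_n -> R).

Lemma row_sum_delta (d : 'rV[R]_n) : d = \sum_j d ord0 j *: delta_mx ord0 j.
Proof.
rewrite {1}(matrix_sum_delta d) big_ord1; apply: eq_bigr => j _.
by rewrite (ord1 ord0).
Qed.

Lemma diff_dot x (d : 'rV[R]_n) : 'd f x d = dotv (gradient f x) d.
Proof.
rewrite {1}(row_sum_delta d) linear_sum /dotv; apply: eq_bigr => j _.
by rewrite linearZ /= mxE mulrC.
Qed.

Lemma phi_derive (u d : 'rV[R]_n) (t : R) : (forall x, differentiable f x) ->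
  is_derive t (1 : R) (fun s : R => f (u + s *: d)) ('d f (u + t *: d) d).
Proof.
move=> df.
have H : is_diff t (cst u + *:%R^~ d) (0 + *:%R^~ d).
  apply: is_diffD.
have dg : differentiable (fun s : R => u + s *: d) t.
  exact: ex_diff.
have dc : differentiable (f \o (fun s : R => u + s *: d)) t.
  exact: differentiable_comp.
apply: DeriveDef; first exact: diff_derivable.
rewrite deriveE // diff_comp //=.
have -> : 'd (fun x : R => u + x *: d) t = 0 + *:%R^~ d :> (R -> _).
  exact: diff_val.
by rewrite /= add0r scale1r.
Qed.
End Diff.
Section Descent.
Variables (R : realType) (n : nat) (L : R) (f : 'rV[R]_n -> R).
Hypothesis hf : C11 L f.

Lemma descent (s : R) (hs : `|s| = 1) (u d : 'rV[R]_n) :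
  s * (f (u + d) - f u - dotv (gradient f u) d) <= L / 2 * enorm d ^+ 2.
Proof.
case: hf => df lip.
set G := dotv (gradient f u) d.
set D := enorm d ^+ 2.
pose phi := fun t : R => f (u + t *: d).
pose h := (s \*: phi) - ((s * G) \*: (id : R -> R)) - ((L / 2 * D) \*: ((id : R -> R) * id)).
pose dh := fun x : R => s *: 'd f (u + x *: d) d - (s * G) *: 1 - (L / 2 * D) *: (x *: 1 + x *: 1).
have Hd x : is_derive x (1 : R) h (dh x).
  apply: is_derive_eq.
  apply: is_deriveB. apply: is_deriveB.
  have P : is_derive x (1:R) phi ('d f (u + x *: d) d) by exact: phi_derive.
  exact: (@is_deriveZ R _ _ phi s x 1 _ P).
  by [].
have hder x : derivable h x (1:R) by have H := Hd x; exact: ex_derive.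
have hc := @derivable_within_continuous R R h `[0, 1]%R (fun x _ => hder x).
have [c cin E] := MVT ltr01 (fun x _ => Hd x) hc.
have h1 : h 1 = s * f (u + d) - s * G - L / 2 * D.
  rewrite /h /phi !fctE /=.
  rewrite -[LHS]/(s * f (u + 1 *: d) - (s * G) * 1 - (L / 2 * D) * (1 * 1)).
  by rewrite scale1r !mulr1.
have h0 : h 0 = s * f u.
  rewrite /h /phi !fctE /=.
  rewrite -[LHS]/(s * f (u + 0 *: d) - (s * G) * 0 - (L / 2 * D) * (0 * 0)).
  by rewrite scale0r addr0 !mulr0 !subr0.
rewrite h1 h0 in E.
have E' : s * f (u + d) - s * G - L / 2 * D - s * f u =
   s * 'd f (u + c *: d) d - s * G - (L / 2 * D) * (c + c).
  rewrite E subr0 mulr1.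
  by rewrite -[LHS]/(s * 'd f (u + c *: d) d - (s * G) * 1 - (L / 2 * D) * (c * 1 + c * 1)) !mulr1.
have c0 : 0 < c by move: cin; rewrite in_itv /= => /andP[].
have K : s * 'd f (u + c *: d) d - s * G <= L * c * D.
  rewrite diff_dot /G -mulrBr -dotvBl.
  apply: (le_trans (ler_norm _)); rewrite normrM hs mul1r.
  set a := gradient f (u + c *: d) - gradient f u.
  have CSi : `|dotv a d| <= enorm a * enorm d by exact: CS.
  apply: (le_trans CSi).
  have L0 := lip (u + c *: d) u.
  have e : u + c *: d - u = c *: d by rewrite addrC addKr.
  rewrite e enormZ gtr0_norm // -/a mulrA in L0.
  rewrite /D expr2 mulrA; apply: ler_pM.
  - exact: enorm_ge0.
  - exact: enorm_ge0.
  - exact: L0.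
  - exact: lexx.
move: E' K; clear -c0.
move: (f (u + d)) (f u) ('d f (u + c *: d) d) => A B C E' K.
have -> : s * (A - B - G) = (s * A - s * G - L / 2 * D - s * B) + L / 2 * D.
  by ring.
rewrite E'.
have -> : L / 2 * D * (c + c) = L * c * D.
  by field.
rewrite -[X in _ <= X]add0r lerD2r subr_le0 //.
Qed.
End Descent.
Lemma rbound (R : realType) (n : nat) (L : R) (f : 'rV[R]_n -> R) :
  C11 L f -> forall u z, `|f z - f u - dotv (gradient f u) (z - u)| <= L / 2 * enorm (z - u) ^+ 2.
Proof.
move=> hf u z.
have e : u + (z - u) = z by rewrite addrC subrK.
have h1 := @descent _ _ _ _ hf _ (normr1 R) u (z - u).
have h2 := @descent _ _ _ _ hf _ (normrN1 R) u (z - u).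
rewrite e mul1r in h1; rewrite e mulN1r in h2.
by rewrite ler_norml h1 lerNl h2.
Qed.

Theorem theorem3p1 (R : realType) (n : nat) (L : R) (f : 'rV[R]_n -> R)
  (y : 'I_n.+1 -> 'rV[R]_n) (m : 'rV[R]_n -> R) (y0 : 'rV[R]_n)
  (ell : 'I_n.+1 -> R) :
  (0 < n)%N -> 0 < L -> C11 L f -> affinely_independent y ->
  affine_fun m -> (forall i, m (y i) = f (y i)) ->
  \sum_i ell i = 1 -> \sum_i ell i *: y i = y0 ->
  forall u : 'rV[R]_n,
    `|m y0 - f y0| <=
      L / 2 * (`|-1 : R| * enorm (y0 - u) ^+ 2
               + \sum_i `|ell i| * enorm (y i - u) ^+ 2).
Proof.
move=> _ L0 hf _ [a [c hm]] my hsum hy0 u.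
set g := gradient f u.
pose r z := f z - f u - dotv g (z - u).
have my0 : m y0 = \sum_i ell i * f (y i).
  rewrite -hy0 hm dotv_sumr.
  have -> : \sum_i ell i * f (y i) = \sum_i (ell i * a + ell i * dotv c (y i)).
    by apply: eq_bigr => i _; rewrite -my hm mulrDr.
  by rewrite big_split /= -mulr_suml hsum mul1r.
have sumyu : \sum_i ell i *: (y i - u) = y0 - u.
  rewrite (eq_bigr (fun i => ell i *: y i - ell i *: u)); last by move=> i _; rewrite scalerBr.
  by rewrite sumrB hy0 -scaler_suml hsum scale1r.
have key : m y0 - f y0 = \sum_i ell i * r (y i) - r y0.
  rewrite my0 /r.
  have -> : \sum_i ell i * r (y i) =
     \sum_i (ell i * f (y i) - ell i * f u - ell i * dotv g (y i - u)).
    by apply: eq_bigr => i _; rewrite /r !mulrBr.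
  rewrite !sumrB -mulr_suml hsum mul1r -dotv_sumr sumyu.
  by rewrite opprB !opprD !opprK; ring.
rewrite key normrN1 mul1r mulrDr.
apply: (le_trans (ler_normB _ _)).
rewrite addrC; apply: lerD; first exact: rbound.
rewrite mulr_sumr.
apply: (le_trans (ler_norm_sum _ _ _)).
apply: ler_sum => i _.
rewrite normrM mulrCA; apply: ler_wpM2l; first exact: normr_ge0.
exact: rbound.
Qed.
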